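(* Let $K$ be a $d$-dimensional convex body with $o\in\mathrm{int}(K)$, let $\delta>0$, and let $\{v_i+\lambda_iK: i\in I\}$ be a pairwise intersecting family of positive homothets of $K$ such that $v_i\notin v_j+\lambda_j\,\mathrm{int}(K)$ for all distinct $i,j\in I$, and $\lambda_i\in[1,1+\delta)$ for each $i\in I$. Then $|I|\le P(K,2(1+\delta))$.
   Context: A convex body is a compact convex set with non-empty interior. For a convex body $L$ with $o\in\mathrm{int}(L)$, $\|x\|_L=\inf\{\mu>0:x\in\mu L\}$. $P(K,\lambda)$ is the maximum number of points $p_1,\dots,p_m$ such that $\max_{i<j}\|p_i-p_j\|_{\frac12(K-K)}\big/\min_{i<j}\|p_i-p_j\|_{K\cap-K}\le\lambda$. *)

(* Defs.v *)
From HB Require Import structures.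
From mathcomp Require Import all_boot all_order all_algebra.
From mathcomp Require Import all_classical all_reals all_analysis.
Set Implicit Arguments. Unset Strict Implicit. Unset Printing Implicit Defensive.
Import Order.TTheory GRing.Theory Num.Theory.
Import numFieldNormedType.Exports.
Local Open Scope classical_set_scope.
Local Open Scope ring_scope.

Definition convexS {R : realType} {d : nat} (K : set 'rV[R]_d) :=
  forall x y (t : R), K x -> K y -> 0 <= t -> t <= 1 ->
    K (t *: x + (1 - t) *: y).

Definition convex_body {R : realType} {d : nat} (K : set 'rV[R]_d) :=
  [/\ compact K, convexS K & interior K !=set0].

Definition gauge {R : realType} {d : nat} (L : set 'rV[R]_d) (x : 'rV[R]_d) : R :=
  inf [set mu : R | 0 < mu /\ exists2 y, L y & x = mu *: y].

Definition half_diff {R : realType} {d : nat} (K : set 'rV[R]_d) : set 'rV[R]_d :=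
  [set z | exists a b, [/\ K a, K b & z = 2^-1 *: (a - b)]].

Definition sym_part {R : realType} {d : nat} (K : set 'rV[R]_d) : set 'rV[R]_d :=
  [set z | K z /\ K (- z)].

(* p_1..p_m (pairwise distinct) with
   max_{i<j} ||p_i-p_j||_{(K-K)/2} / min_{i<j} ||p_i-p_j||_{K ∩ -K} <= lambda,
   written as: every distance of the first kind is <= lambda times every
   distance of the second kind (equivalent for m >= 2; vacuous for m <= 1). *)
Definition P_config {R : realType} {d : nat} (K : set 'rV[R]_d) (lambda : R)
    (m : nat) (p : 'I_m -> 'rV[R]_d) :=
  injective p /\
  forall i j k l : 'I_m, i != j -> k != l ->
    gauge (half_diff K) (p i - p j) <= lambda * gauge (sym_part K) (p k - p l).

Definition P_num {R : realType} {d : nat} (K : set 'rV[R]_d) (lambda : R) : \bar R :=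
  ereal_sup [set (m%:R)%:E | m in [set m : nat | exists p : 'I_m -> 'rV[R]_d, P_config K lambda p]].

Definition homothet {R : realType} {d : nat} (v : 'rV[R]_d) (lam : R)
    (A : set 'rV[R]_d) : set 'rV[R]_d :=
  [set x | exists2 y, A y & x = v + lam *: y].

(* Main.v *)
Require Import Defs.
From HB Require Import structures.
From mathcomp Require Import all_boot all_order all_algebra.
From mathcomp Require Import all_classical all_reals all_analysis.
Import Order.TTheory GRing.Theory Num.Theory.
Import numFieldNormedType.Exports.
Local Open Scope classical_set_scope.
Local Open Scope ring_scope.

Lemma ball0K (R : realType) (d : nat) (K : set 'rV[R]_d) :
  interior K 0 -> exists2 e : R, 0 < e & forall x, `|x| < e -> K x.
Proof.
move=> /nbhs_ballP [e e0 he]; exists e => // x hx; apply: he.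
by rewrite -ball_normE /= sub0r normrN.
Qed.

Lemma int_scale (R : realType) (d : nat) (K : set 'rV[R]_d) (t : R) y :
  convexS K -> interior K 0 -> 0 <= t < 1 -> K y -> interior K (t *: y).
Proof.
move=> cK /ball0K [e e0 he] /andP[t0 t1] Ky.
have t1' : 0 < 1 - t by rewrite subr_gt0.
apply/nbhs_ballP; exists ((1 - t) * e); first exact: mulr_gt0.
move=> w; rewrite -ball_normE /= => hw.
have Ku : K ((1 - t)^-1 *: (w - t *: y)).
  apply: he; rewrite normrZ ger0_norm ?invr_ge0 ?ltW // distrC mulrC.
  by rewrite ltr_pdivrMr // mulrC.
have := cK _ _ t Ky Ku t0 (ltW t1).
by rewrite scalerA divff ?gt_eqF // scale1r addrC subrK.
Qed.

Lemma scaleK (R : realType) (d : nat) (K : set 'rV[R]_d) (s : R) b :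
  convexS K -> K 0 -> 0 <= s <= 1 -> K b -> K (s *: b).
Proof.
move=> cK K0 /andP[s0 s1] Kb.
by have := cK _ _ s Kb K0 s0 s1; rewrite scaler0 addr0.
Qed.

Lemma gauge_half (R : realType) (d : nat) (K : set 'rV[R]_d) x y (m : R) :
  0 < m -> (exists2 a, K a & exists2 b, K b & x - y = m *: (b - a)) ->
  gauge (half_diff K) (x - y) <= 2 * m.
Proof.
move=> m0 [a Ka [b Kb e]].
apply: ge_inf.
  by exists 0 => z [z0 _]; exact: ltW.
split; first by rewrite mulr_gt0.
exists (2^-1 *: (b - a)); first by exists b, a.
by rewrite scalerA mulrAC divff ?mul1r // pnatr_eq0.
Qed.

Lemma gauge_sym (R : realType) (d : nat) (K : set 'rV[R]_d) z :
  interior K 0 -> (forall m y, 0 < m -> m < 1 -> K y -> z <> m *: y) ->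
  1 <= gauge (sym_part K) z.
Proof.
move=> /[dup] K0 /ball0K [e e0 he] H.
apply: lb_le_inf.
  pose m := (`|z| + 1) / e.
  have m0 : 0 < m by rewrite divr_gt0 // ltr_pwDr.
  exists m; split => //; exists (m^-1 *: z).
    have hn : `|m^-1 *: z| < e.
      rewrite normrZ ger0_norm ?invr_ge0 ?ltW // invf_div.
      rewrite mulrAC ltr_pdivrMr ?ltr_pwDr // ltr_pM2l //.
      by rewrite ltrDl.
    by split; apply: he; rewrite ?normrN.
  by rewrite scalerA divff ?gt_eqF ?scale1r.
move=> m [m0 [y [Ky _] ez]].
rewrite leNgt; apply/negP => m1.
exact: (H m y m0 m1 Ky ez).
Qed.

Theorem lemma19 (R : realType) (d : nat) (K : set 'rV[R]_d) (delta : R)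
    (I : Type) (v : I -> 'rV[R]_d) (lam : I -> R) :
  convex_body K -> interior K 0 -> 0 < delta ->
  (forall i j, homothet (v i) (lam i) K `&` homothet (v j) (lam j) K !=set0) ->
  (forall i j, i <> j -> ~ homothet (v j) (lam j) (interior K) (v i)) ->
  (forall i, 1 <= lam i < 1 + delta) ->
  forall (n : nat) (f : 'I_n -> I), injective f ->
    ((n%:R)%:E <= P_num K (2 * (1 + delta)))%E.
Proof.
move=> [_ cK _] iK0 dp Hint Hsep Hlam n f finj.
have K0 : K 0 := nbhs_singleton iK0.
have lam0 i : 0 < lam i.
  by have /andP[h _] := Hlam i; apply: lt_le_trans h.
have A i j : gauge (half_diff K) (v i - v j) <= 2 * (1 + delta).
  have [x [[a Ka ea] [b Kb eb]]] := Hint i j.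
  pose m := Num.max (lam i) (lam j).
  have m0 : 0 < m by rewrite lt_max lam0.
  have hi : lam i <= m by rewrite le_max lexx.
  have hj : lam j <= m by rewrite le_max lexx orbT.
  apply: (@le_trans _ _ (2 * m)).
    apply: gauge_half => //.
    exists ((lam i / m) *: a).
      apply: scaleK => //; rewrite divr_ge0 ?(ltW (lam0 _)) ?(ltW m0) //=.
      by rewrite ler_pdivrMr // mul1r.
    exists ((lam j / m) *: b).
      apply: scaleK => //; rewrite divr_ge0 ?(ltW (lam0 _)) ?(ltW m0) //=.
      by rewrite ler_pdivrMr // mul1r.
    rewrite scalerBr !scalerA !mulrA !(mulrC m) -!mulrA divff ?gt_eqF // !mulr1.

    have -> : v i = x - lam i *: a by rewrite ea addrK.
    by rewrite eb [v j + _]addrC addrAC addrK.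
  rewrite ler_pM2l // comparable_ge_max ?real_comparable ?num_real //.
  by have /andP[_ /ltW ->] := Hlam i; have /andP[_ /ltW ->] := Hlam j.
have B i j : i <> j -> 1 <= gauge (sym_part K) (v i - v j).
  move=> ij; apply: gauge_sym => // m y m0 m1 Ky e.
  apply: (Hsep i j ij); exists ((m / lam j) *: y).
    apply: int_scale => //; rewrite divr_ge0 ?ltW //=.
    rewrite ltr_pdivrMr // mul1r; apply: lt_le_trans m1 _.
    by have /andP[] := Hlam j.
  rewrite scalerA mulrC divfK ?gt_eqF // -e.
  by rewrite addrC subrK.
apply: ereal_sup_ubound; exists n => //=.
exists (v \o f); split.
  move=> a b /= e; case: (pselect (f a = f b)) => [/finj //|ab]; exfalso.
  apply: (Hsep (f a) (f b) ab); exists 0 => //.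
  by rewrite scaler0 addr0.
move=> i j k l ij kl /=.
apply: (le_trans (A _ _)).
rewrite -{1}(mulr1 (2 * (1 + delta))) ler_wpM2l //.
  by rewrite mulr_ge0 // addr_ge0 // ltW.
apply: B => e; move/negP: kl; apply; apply/eqP; exact: finj e.
Qed.
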